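(* For $\lambda,\mu\in\Lambda$ we have $\lambda\leq\mu$ in the Bruhat order if and only if $$\sum_{\substack{1\le i\le n_1+\cdots+n_k\\(\lambda+\rho,\delta_i)\le h}}(-1)^{p_i}\;\geq\sum_{\substack{1\le i\le n_1+\cdots+n_k\\(\mu+\rho,\delta_i)\le h}}(-1)^{p_i}$$ for all $h\in\mathbb{Z}$ and $1\leq k\leq l$, with equality whenever $k=l$.
   Context: Let $(\underline{n},\underline{c})\in\mathbb{N}^l\times\{0,1\}^l$ and $\mathfrak{g}=\mathfrak{gl}(U)$ for the superspace $U=U_1\oplus\cdots\oplus U_l$, $U_i$ of dimension $n_i$ in parity $\bar c_i$, over an algebraically closed field of characteristic $0$. Homogeneous basis $u_1,\dots,u_{m+n}$ ($m+n=\sum n_i$) concatenating bases of $U_1,\dots,U_l$; $p_i$ the parity of $u_i$; $\delta_i$ the standard basis of $\mathfrak{t}^*$ dual to the diagonal matrix units, $(\delta_i,\delta_j)=(-1)^{p_i}\delta_{ij}$; $\rho=-\sum_{i<j}(-1)^{p_i+p_j}\delta_j-\sum_{p_i=\bar1}\delta_i$; $\mathfrak{t}^*_{\mathbb{Z}}=\bigoplus\mathbb{Z}\delta_i$. Bruhat order: $\lambda\leq\mu$ iff for all $h\in\mathbb{Z}$ and $1\le j\le m+n$, $\sum_{1\le i\le j,\,(\lambda+\rho,\delta_i)\le h}(-1)^{p_i}\geq\sum_{1\le i\le j,\,(\mu+\rho,\delta_i)\le h}(-1)^{p_i}$, with equality when $j=m+n$. $\Lambda:=\{\lambda\in\mathfrak{t}^*_{\mathbb{Z}}:(-1)^{c_k}(\lambda+\rho,\delta_i-\delta_{i+1})>0$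 for all $1\le k\le l$ and $n_1+\cdots+n_{k-1}<i<n_1+\cdots+n_k\}$. *)

(* Defs.v *)
From mathcomp Require Import all_boot all_order all_algebra.
Set Implicit Arguments. Unset Strict Implicit. Unset Printing Implicit Defensive.
Import Order.TTheory GRing.Theory Num.Theory.
Local Open Scope ring_scope.

(* Data: l blocks; block k (0-indexed, k < l) has dimension n k and parity c k.
   Positions (basis vectors u_1..u_{m+n}) are 0-indexed: position i (0-indexed)
   corresponds to the paper's index i+1. *)

Definition S (n : nat -> nat) (k : nat) : nat := (\sum_(j < k) n j)%N.

Definition par (l : nat) (n : nat -> nat) (c : nat -> bool) (i : nat) : bool :=
  [exists k : 'I_l, (S n k <= i < S n k.+1)%N && c k].

Definition sgn (b : bool) : int := (-1) ^+ b.

Definition rho (l : nat) (n : nat -> nat) (c : nat -> bool) (j : nat) : int :=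
  - (\sum_(i < j) sgn (par l n c i) * sgn (par l n c j)) - ((par l n c j : nat)%:Z).

(* Weights lambda = sum_i lam_i delta_i in t*_Z, m+n = S n l. *)
Definition weight (l : nat) (n : nat -> nat) := 'I_(S n l) -> int.

(* (lambda + rho, delta_i) = (-1)^{p_i} (lam_i + rho_i). *)
Definition pair_rho (l : nat) (n : nat -> nat) (c : nat -> bool)
  (lam : weight l n) (i : 'I_(S n l)) : int :=
  sgn (par l n c i) * (lam i + rho l n c i).

(* sum over paper indices 1 <= i <= j with (lambda+rho, delta_i) <= h of (-1)^{p_i} *)
Definition cnt (l : nat) (n : nat -> nat) (c : nat -> bool)
  (lam : weight l n) (h : int) (j : nat) : int :=
  \sum_(i < S n l | ((i < j)%N && (pair_rho c lam i <= h))) sgn (par l n c i).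

Definition bruhat_le (l : nat) (n : nat -> nat) (c : nat -> bool)
  (lam mu : weight l n) : Prop :=
  (forall (h : int) (j : nat), (1 <= j <= S n l)%N -> cnt c mu h j <= cnt c lam h j)
  /\ (forall h : int, cnt c lam h (S n l) = cnt c mu h (S n l)).

Definition inLambda (l : nat) (n : nat -> nat) (c : nat -> bool) (lam : weight l n) : Prop :=
  forall (k : 'I_l) (i j : 'I_(S n l)), val j = (val i).+1 ->
    (S n k < j < S n k.+1)%N ->
    0 < sgn (c k) * (pair_rho c lam i - pair_rho c lam j).

(* Main.v *)
Require Import Defs.
From mathcomp Require Import all_boot all_order all_algebra zify.
Import Order.TTheory GRing.Theory Num.Theory.
Local Open Scope ring_scope.

Lemma SS (n : nat -> nat) k : S n k.+1 = (S n k + n k)%N.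
Proof. by rewrite /S big_ord_recr. Qed.

Lemma S_mono (n : nat -> nat) a b : (a <= b)%N -> (S n a <= S n b)%N.
Proof.
move=> /subnKC <-; elim: (b - a)%N => [|d IH]; first by rewrite addn0.
by rewrite addnS SS; apply: leq_trans IH (leq_addr _ _).
Qed.

Lemma par_block l (n : nat -> nat) c (k : 'I_l) i :
  (S n k <= i < S n k.+1)%N -> par l n c i = c k.
Proof.
move=> /andP[h1 h2]; rewrite /par; apply/existsP/idP.
- case=> k' /andP[/andP[h3 h4] hc].
  suff -> : k = k' by [].
  apply/val_inj/eqP; rewrite eqn_leq; apply/andP; split; rewrite leqNgt; apply/negP=> hlt.
  + have := @S_mono n (k'.+1) k hlt; lia.
  + have := @S_mono n (k.+1) k' hlt; lia.
- by move=> hc; exists k; rewrite h1 h2 hc.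
Qed.

Lemma exists_block (n : nat -> nat) L j : (j <= S n L)%N -> (0 < L)%N ->
  exists k, (k < L)%N /\ (S n k <= j <= S n k.+1)%N.
Proof.
elim: L => [|L IH] // hj _.
case: (leqP j (S n L)) => hjL.
- case: L IH hj hjL => [|L] IH hj hjL.
  + by exists 0%N; split => //; rewrite /S big_ord0 hj.
  + have [k [hk hk']] := IH hjL isT; exists k; split => //; lia.
- by exists L; split => //; rewrite hj andbT ltnW.
Qed.

Set Implicit Arguments. Unset Strict Implicit.

Lemma mono_block l (n : nat -> nat) c (lam : weight l n) (H : inLambda c lam)
  (k : 'I_l) d : forall (i i' : 'I_(S n l)), val i' = (val i + d.+1)%N ->
  (S n k <= i)%N -> (i' < S n k.+1)%N ->
  0 < sgn (c k) * (pair_rho c lam i - pair_rho c lam i').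
Proof.
elim: d => [|d IH] i i' hii' h1 h2; rewrite /= in hii'.
  apply: H; [by rewrite /= hii' addn1 | rewrite h2 andbT; lia].
have hm : (i + d.+1 < S n l)%N by have := ltn_ord i'; lia.
pose m := Ordinal hm.
have := IH i m erefl h1 ltac:(rewrite /=; lia).
have := H k m i' ltac:(rewrite /=; lia) ltac:(rewrite h2 andbT /=; lia).
move=> A B; have -> : pair_rho c lam i - pair_rho c lam i' =
  (pair_rho c lam i - pair_rho c lam m) + (pair_rho c lam m - pair_rho c lam i') by rewrite addrA subrK.
by rewrite mulrDr addr_gt0.
Qed.

Definition dd l (n : nat -> nat) c (lam mu : weight l n) (h : int) (i : 'I_(S n l)) : int :=
  sgn (par l n c i) * ((if pair_rho c lam i <= h then 1 else 0) - (if pair_rho c mu i <= h then 1 else 0)).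

Lemma cnt_diff l (n : nat -> nat) c (lam mu : weight l n) h j :
  cnt c lam h j - cnt c mu h j = \sum_(i < S n l | (i < j)%N) dd c lam mu h i.
Proof.
rewrite /cnt !big_mkcondr -sumrB; apply: eq_bigr => i _; rewrite /dd mulrBr.
by case: ifP; case: ifP; rewrite ?mulr1 ?mulr0 ?subr0 ?sub0r.
Qed.

Lemma no_opp l (n : nat -> nat) c (lam mu : weight l n) (Hl : inLambda c lam) (Hm : inLambda c mu)
  h (k : 'I_l) (i1 i2 : 'I_(S n l)) :
  (S n k <= i1 < S n k.+1)%N -> (S n k <= i2 < S n k.+1)%N ->
  ~ (0 < dd c lam mu h i1 /\ dd c lam mu h i2 < 0).
Proof.
move=> b1 b2 [D1 D2].
move: D1 D2; rewrite /dd (@par_block _ _ c _ _ b1) (@par_block _ _ c _ _ b2).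
case: (ltngtP i1 i2) => hlt.
- have e : nat_of_ord i2 = (nat_of_ord i1 + (i2 - i1).-1.+1)%N by lia.
  have := mono_block (k:=k) Hl e ltac:(lia) ltac:(lia).
  have := mono_block (k:=k) Hm e ltac:(lia) ltac:(lia).
  case: (c k); rewrite /sgn /= ?expr0 ?expr1 ?mul1r ?mulN1r;
  case: ifP; case: ifP; case: ifP; case: ifP; lia.
- have e : nat_of_ord i1 = (nat_of_ord i2 + (i1 - i2).-1.+1)%N by lia.
  have := mono_block (k:=k) Hl e ltac:(lia) ltac:(lia).
  have := mono_block (k:=k) Hm e ltac:(lia) ltac:(lia).
  case: (c k); rewrite /sgn /= ?expr0 ?expr1 ?mul1r ?mulN1r;
  case: ifP; case: ifP; case: ifP; case: ifP; lia.
- have -> : i1 = i2 by apply: val_inj.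
  move=> A B; have := lt_trans A B; by rewrite ltxx.
Qed.

Lemma cnt0 l (n : nat -> nat) c (lam : weight l n) h : cnt c lam h 0 = 0.
Proof. by rewrite /cnt big_pred0 // => i; rewrite ltn0. Qed.

Lemma split_dd l (n : nat -> nat) c (lam mu : weight l n) h a b : (a <= b)%N ->
  \sum_(i < S n l | (i < b)%N) dd c lam mu h i =
  \sum_(i < S n l | (i < a)%N) dd c lam mu h i +
  \sum_(i < S n l | (a <= i < b)%N) dd c lam mu h i.
Proof.
move=> hab; rewrite (bigID (fun i : 'I_(S n l) => (i < a)%N)) /=; congr (_ + _).
  by apply: eq_bigl => i; apply/idP/idP; lia.
by apply: eq_bigl => i; apply/idP/idP; lia.
Qed.

Theorem lemma3p9 (l : nat) (n : nat -> nat) (c : nat -> bool) (lam mu : weight l n) :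
  inLambda c lam -> inLambda c mu ->
  (bruhat_le c lam mu <->
   ((forall (h : int) (k : nat), (1 <= k <= l)%N ->
       cnt c mu h (S n k) <= cnt c lam h (S n k))
    /\ (forall h : int, cnt c lam h (S n l) = cnt c mu h (S n l)))).
Proof.
move=> Hl Hm; split.
- case=> H1 H2; split => // h k /andP[k1 kl].
  case: (posnP (S n k)) => [->|hk]; first by rewrite !cnt0.
  by apply: H1; rewrite hk S_mono.
- case=> H1 H2; split => // h j /andP[j1 jl].
  rewrite -subr_ge0 cnt_diff.
  have l0 : (0 < l)%N by case: l {Hl Hm lam mu H1 H2} jl => //; rewrite /S big_ord0; lia.
  have [k [kl /andP[jk1 jk2]]] := @exists_block n l j jl l0.
  have G0 : forall k', (k' <= l)%N ->
      0 <= \sum_(i < S n l | (i < S n k')%N) dd c lam mu h i.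
    move=> [|k'] hk'.
      by rewrite big_pred0 // => i; rewrite /S big_ord0 ltn0.
    by rewrite -cnt_diff subr_ge0 H1.
  pose kO := Ordinal kl.
  case: (boolP [exists i : 'I_(S n l), (S n k <= i < S n k.+1)%N && (dd c lam mu h i < 0)]).
  + move=> /existsP[i2 /andP[b2 D2]].
    have := G0 k.+1 kl; rewrite (split_dd _ _ _ _ jk2) => G.
    apply: le_trans G _; rewrite gerDl.
    apply: sumr_le0 => i /andP[i1 i2']; rewrite leNgt; apply/negP => D1.
    apply: (@no_opp _ _ c lam mu Hl Hm h kO i i2) => //=; first lia.
  + rewrite negb_exists => /forallP Hall.
    rewrite (split_dd _ _ _ _ jk1); apply: addr_ge0; first exact: G0 (ltnW kl).
    apply: sumr_ge0 => i /andP[i1 i2']; move: (Hall i).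
    rewrite negb_and ltNge negbK => /orP[|//]; lia.
Qed.
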